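(* Let $p,q\in\mathbb{H}^2$ with $\mathbb{H}^2=p\mathbb{H}\oplus q\mathbb{H}$, let $S$ be the round two-sphere $\{[px+q]:x\in\mathbb{C}\}\cup\{[p]\}\cong\mathbb{C}\cup\{\infty\}$, so that the circle through $[p],[q],[r]$, $r=p+q$, is $\{[px+q]:x\in\mathbb{R}\}\cup\{[p]\}$. Let $C_r=\mathbb{P}(\mathrm{span}\{p\wedge pj,q\wedge qj,r\wedge rj\})\cap Q^4$. Then every point of $C_r$ corresponds either to a point of this circle (including $\infty=[p]$), or to a two-sphere in $\mathbb{HP}^1$ which half-touches $S$ (in these coordinates) at a pair of points $z,\bar z$ of $\mathbb{C}$, i.e. at $[pz+q]$ and $[p\bar z+q]$.
   Context: $\mathbb{H}$ denotes the quaternions, $\mathbb{C}=\mathrm{span}_{\mathbb{R}}\{1,i\}$, $zj=j\bar z$ for $z\in\mathbb{C}$; $\mathbb{H}^2$ is a right $\mathbb{H}$-vector space identified with $\mathbb{C}^4$; $\mathbb{HP}^1=\{v\mathbb{H}\}\cong S^4$; $\mathbb{CP}^3=\mathbb{P}(\mathbb{C}^4)$; the twistor fibre over $v\mathbb{H}$ is the line through $[v],[vj]$. $Q^4=\{[\alpha]\in\mathbb{P}(\Lambda^2\mathbb{C}^4):\alpha\wedge\alpha=0\}$, $[v\wedge w]$ identified with the line through $[v],[w]$. The antilinear extension of $v\wedge w\mapsto vj\wedge wj$ gives a real structure $j$ on $Q^4$ whose real points $[v\wedge vj]$ are identified with points $v\mathbb{H}$ of $S^4$; a non-real point is the twistor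 lift of a round two-sphere with conformal structure (its image under $v\mathbb{C}\mapsto v\mathbb{H}$). The twistor lift of $S$ (with the conformal structure in which $x\in\mathbb{C}$ is a holomorphic coordinate) is the line through $[p],[q]$. A null line is a projective line contained in $Q^4$; two distinct two-spheres half-touch if they span a null line containing no real point; they then meet in exactly two points of $S^4$, at which they are said to half-touch. *)

(* Defs.v *)
From HB Require Import structures.
From mathcomp Require Import all_boot all_order all_algebra.
Set Implicit Arguments. Unset Strict Implicit. Unset Printing Implicit Defensive.
Import Order.TTheory GRing.Theory Num.Theory.
Local Open Scope ring_scope.

Section Twistor.
Variable C : numClosedFieldType.

(* H^2 identified with C^4 (column vectors): a quaternion is written a + j b
   (a, b in C), so (a1 + j b1, a2 + j b2) |-> (a1, b1, a2, b2); right
   multiplication by z in C is scalar multiplication.  Right multiplication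
   by j is then (a, b) |-> (-conj b, conj a) in each quaternionic coordinate. *)
Definition Jm : 'M[C]_4 :=
  \matrix_(i < 4, j < 4)
    (if ((i : nat) == (j : nat).+1) && odd i then 1
     else if ((j : nat) == (i : nat).+1) && ~~ odd i then -1 else 0).

Definition quatj (v : 'cV[C]_4) : 'cV[C]_4 := Jm *m map_mx Num.conj v.

(* Lambda^2 C^4 represented by antisymmetric 4x4 matrices; v /\ w *)
Definition wedge (v w : 'cV[C]_4) : 'M[C]_4 := v *m w^T - w *m v^T.

(* antilinear extension of v /\ w |-> vj /\ wj *)
Definition jwedge (a : 'M[C]_4) : 'M[C]_4 := Jm *m map_mx Num.conj a *m Jm^T.

Definition i0 : 'I_4 := Ordinal (isT : (0 < 4)%N).
Definition i1 : 'I_4 := Ordinal (isT : (1 < 4)%N).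
Definition i2 : 'I_4 := Ordinal (isT : (2 < 4)%N).
Definition i3 : 'I_4 := Ordinal (isT : (3 < 4)%N).

(* a /\ a = 2 * pf a * e0/\e1/\e2/\e3 *)
Definition pf (a : 'M[C]_4) : C :=
  a i0 i1 * a i2 i3 - a i0 i2 * a i1 i3 + a i0 i3 * a i1 i2.

Definition inQ4 (a : 'M[C]_4) : Prop := a != 0 /\ pf a = 0.

Definition is_real_pt (a : 'M[C]_4) : Prop := exists c : C, jwedge a = c *: a.

(* u /\ a = 0 in Lambda^3 C^4, i.e. [u] lies on the line [a] *)
Definition on_line (u : 'cV[C]_4) (a : 'M[C]_4) : Prop :=
  forall i j k : 'I_4, u i ord0 * a j k - u j ord0 * a i k + u k ord0 * a i j = 0.

(* u in vH, i.e. u in span_C {v, vj}; for nonzero u, v this says uH = vH *)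
Definition in_qline (u v : 'cV[C]_4) : Prop :=
  exists a b : C, u = a *: v + b *: quatj v.

(* H^2 = pH (+) qH : p, pj, q, qj are C-linearly independent *)
Definition qdirect (p q : 'cV[C]_4) : Prop :=
  forall a b c d : C,
    a *: p + b *: quatj p + c *: q + d *: quatj q = 0 ->
    [/\ a = 0, b = 0, c = 0 & d = 0].

(* the point uH of S^4 = HP^1 lies on the two-sphere whose twistor lift is
   the line [a]: the image of the line under vC |-> vH *)
Definition on_sphere (a : 'M[C]_4) (u : 'cV[C]_4) : Prop :=
  exists u' : 'cV[C]_4, [/\ u' != 0, in_qline u' u & on_line u' a].

(* two distinct two-spheres (non-real points a, b of Q^4) half-touch:
   they span a null line containing no real point *)
Definition half_touch (a b : 'M[C]_4) : Prop :=
  [/\ inQ4 a /\ inQ4 b, ~ is_real_pt a /\ ~ is_real_pt b,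
      (forall c : C, a != c *: b),
      (forall s t : C, pf (s *: a + t *: b) = 0) &
      (forall s t : C, s *: a + t *: b != 0 -> ~ is_real_pt (s *: a + t *: b))].

Definition in_Cr (p q r : 'cV[C]_4) (a : 'M[C]_4) : Prop :=
  inQ4 a /\ exists x y z : C,
    a = x *: wedge p (quatj p) + y *: wedge q (quatj q) + z *: wedge r (quatj r).

End Twistor.

(* Main.v *)
Require Import Defs.
From HB Require Import structures.
From mathcomp Require Import all_boot all_order all_algebra ring.
Import Order.TTheory GRing.Theory Num.Theory.
Local Open Scope ring_scope.
Set Implicit Arguments. Unset Strict Implicit.
Section S.
Variable C : numClosedFieldType.
Implicit Types (u v w : 'cV[C]_4) (A K : 'M[C]_4).
Definition vec4 (a b c d : C) : 'cV[C]_4 := \col_(i < 4) nth 0 [:: a; b; c; d] i.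
Definition J0 : 'M[C]_4 := wedge (vec4 1 0 0 0) (vec4 0 1 0 0) + wedge (vec4 0 0 1 0) (vec4 0 0 0 1).

Lemma big4 (F : 'I_4 -> C) : \sum_(i < 4) F i = F (i0) + F (i1) + F (i2) + F (i3).
Proof.
rewrite !big_ord_recl big_ord0 addr0 !addrA.
by do 3? congr (_ + _); congr F; apply: val_inj.
Qed.

Lemma ord4_cases (i : 'I_4) : [\/ i = i0, i = i1, i = i2 | i = i3].
Proof.
case: i => [[|[|[|[|//]]]] Hi].
- by apply: Or41; apply: val_inj.
- by apply: Or42; apply: val_inj.
- by apply: Or43; apply: val_inj.
- by apply: Or44; apply: val_inj.
Qed.

Lemma col4P u v : u i0 ord0 = v i0 ord0 -> u i1 ord0 = v i1 ord0 ->
  u i2 ord0 = v i2 ord0 -> u i3 ord0 = v i3 ord0 -> u = v.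
Proof.
move=> h0 h1 h2 h3; apply/colP => i; rewrite (ord1 ord0) in h0 h1 h2 h3 *.
by case: (ord4_cases i) => ->.
Qed.

Lemma v40 a b c d : vec4 a b c d i0 ord0 = a. Proof. by rewrite mxE. Qed.
Lemma v41 a b c d : vec4 a b c d i1 ord0 = b. Proof. by rewrite mxE. Qed.
Lemma v42 a b c d : vec4 a b c d i2 ord0 = c. Proof. by rewrite mxE. Qed.
Lemma v43 a b c d : vec4 a b c d i3 ord0 = d. Proof. by rewrite mxE. Qed.
Definition v4E := (v40, v41, v42, v43).

Lemma addE m n (A B : 'M[C]_(m,n)) i j : (A + B) i j = A i j + B i j.
Proof. by rewrite mxE. Qed.
Lemma oppE m n (A : 'M[C]_(m,n)) i j : (- A) i j = - A i j.
Proof. by rewrite mxE. Qed.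
Lemma scaleE m n c (A : 'M[C]_(m,n)) i j : (c *: A) i j = c * A i j.
Proof. by rewrite mxE. Qed.
Lemma zeroE m n i j : (0 : 'M[C]_(m,n)) i j = 0.
Proof. by rewrite mxE. Qed.
Definition linE := (addE, oppE, scaleE, zeroE).

Lemma wedgeE u v i j : wedge u v i j = u i ord0 * v j ord0 - v i ord0 * u j ord0.
Proof. by rewrite /wedge !mxE !big_ord1 !mxE. Qed.

Lemma wedge_tr u v : (wedge u v)^T = - wedge u v.
Proof. by rewrite /wedge linearB /= !trmx_mul !trmxK opprB. Qed.

Lemma quatj0 u : quatj u i0 ord0 = - (u i1 ord0)^*.
Proof. rewrite /quatj mxE big4 !mxE /=; ring. Qed.
Lemma quatj1 u : quatj u i1 ord0 = (u i0 ord0)^*.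
Proof. rewrite /quatj mxE big4 !mxE /=; ring. Qed.
Lemma quatj2 u : quatj u i2 ord0 = - (u i3 ord0)^*.
Proof. rewrite /quatj mxE big4 !mxE /=; ring. Qed.
Lemma quatj3 u : quatj u i3 ord0 = (u i2 ord0)^*.
Proof. rewrite /quatj mxE big4 !mxE /=; ring. Qed.
Definition quatjE := (quatj0, quatj1, quatj2, quatj3).

Lemma quatjD u v : quatj (u + v) = quatj u + quatj v.
Proof. apply: col4P; rewrite !quatjE !linE ?quatjE rmorphD; ring. Qed.
Lemma quatjZ c u : quatj (c *: u) = c^* *: quatj u.
Proof. apply: col4P; rewrite !quatjE !linE ?quatjE rmorphM; ring. Qed.
Lemma quatjN u : quatj (- u) = - quatj u.
Proof. apply: col4P; rewrite !quatjE !linE ?quatjE rmorphN; ring. Qed.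
Lemma quatjK u : quatj (quatj u) = - u.
Proof. apply: col4P; rewrite !quatjE !linE ?quatjE ?rmorphN /= !conjCK; ring. Qed.
Lemma quatj_vec4 a b c d : quatj (vec4 a b c d) = vec4 (- b^*) a^* (- d^*) c^*.
Proof. apply: col4P; rewrite !quatjE !v4E //. Qed.

Lemma jwedge_wedge u v : jwedge (wedge u v) = wedge (quatj u) (quatj v).
Proof.
rewrite /jwedge /wedge /quatj map_mxB !map_mxM -!map_trmx.
by rewrite mulmxBr mulmxBl !trmx_mul !mulmxA.
Qed.
Lemma jwedgeD A K : jwedge (A + K) = jwedge A + jwedge K.
Proof. by rewrite /jwedge map_mxD mulmxDr mulmxDl. Qed.
Lemma jwedgeZ c A : jwedge (c *: A) = c^* *: jwedge A.
Proof.
rewrite /jwedge (_ : map_mx Num.conj (c *: A) = c^* *: map_mx Num.conj A).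
  by rewrite -scalemxAr -scalemxAl.
by apply/matrixP => i j; rewrite !mxE rmorphM.
Qed.


Fact W_key : unit. Proof. exact: tt. Qed.
Definition W := locked_with W_key (@wedge C).
Lemma WE : @wedge C = W. Proof. by rewrite /W unlock. Qed.
Lemma WijE u v i j : W u v i j = u i ord0 * v j ord0 - v i ord0 * u j ord0.
Proof. by rewrite -WE wedgeE. Qed.

Lemma BKB_E (B K : 'M[C]_4) i j : (B *m K *m B^T) i j =
  \sum_(k < 4) \sum_(l < 4) B i k * K k l * B j l.
Proof.
rewrite mxE (eq_bigr (fun l => \sum_(k < 4) B i k * K k l * B j l)).
  by rewrite exchange_big.
by move=> l _; rewrite !mxE big_distrl; apply: eq_bigr => k _; rewrite ?mxE.
Qed.

Lemma J0E (B : 'M[C]_4) i j : (B *m J0 *m B^T) i j =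
  B i i0 * B j i1 - B i i1 * B j i0 + B i i2 * B j i3 - B i i3 * B j i2.
Proof.
rewrite BKB_E !big4 /J0 WE !linE !WijE !v4E. ring.
Qed.

Lemma pf_tr (B K : 'M[C]_4) : K^T = - K ->
  pf (B *m K *m B^T) = pf (B *m J0 *m B^T) * pf K.
Proof.
move=> HK.
have A : forall i j, K j i = - K i j.
  by move=> i j; have := congr1 (fun M : 'M[C]_4 => M i j) HK; rewrite !mxE.
have D : forall i, K i i = 0.
  move=> i; have := A i i; move/eqP; rewrite -addr_eq0 -mulr2n mulrn_eq0 /=. by move/eqP.
rewrite /pf !J0E !BKB_E !big4.
rewrite !D ![K i1 i0]A ![K i2 i0]A ![K i3 i0]A ![K i2 i1]A ![K i3 i1]A ![K i3 i2]A.
ring.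
Qed.

Lemma pf_tr0 (B K : 'M[C]_4) : K^T = - K -> pf K = 0 -> pf (B *m K *m B^T) = 0.
Proof. by move=> HK H0; rewrite pf_tr // H0 mulr0. Qed.

Lemma lin0 (g L R : C) : L = R -> g = L - R -> g = 0.
Proof. by move=> -> ->; rewrite subrr. Qed.
Lemma lin0' (A B S : C) : S = 0 -> A - B = S -> A = B.
Proof. by move=> H0 H; apply/eqP; rewrite -subr_eq0 H H0. Qed.

Definition cf (F : 'M[C]_4) i v := \sum_(k < 4) F i k * v k ord0.



Lemma contraction (F : 'M[C]_4) i j u v w : on_line u (wedge v w) ->
  (cf F i v * cf F j w - cf F i w * cf F j v) *: u =
  (cf F i u * cf F j w - cf F j u * cf F i w) *: v +
  (cf F j u * cf F i v - cf F i u * cf F j v) *: w.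
Proof.
move=> H; apply/matrixP => l o; rewrite (ord1 o) {o} !linE.
have key : \sum_(a < 4) \sum_(b < 4) F i a * F j b *
   (u l ord0 * wedge v w a b - u a ord0 * wedge v w l b + u b ord0 * wedge v w l a) = 0.
  by rewrite big1 // => a _; rewrite big1 // => b _; rewrite H mulr0.
apply: (lin0' key).
rewrite /cf WE !big4 !WijE.
ring.
Qed.

Lemma on_line_scale u c A : c != 0 -> on_line u (c *: A) -> on_line u A.
Proof.
move=> cnz H i j k; have := H i j k; rewrite !linE.
have -> : u i ord0 * (c * A j k) - u j ord0 * (c * A i k) + u k ord0 * (c * A i j)
   = c * (u i ord0 * A j k - u j ord0 * A i k + u k ord0 * A i j) by ring.
by move/eqP; rewrite mulf_eq0 (negbTE cnz) /= => /eqP.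
Qed.

Lemma on_line_l c v w : on_line v (c *: wedge v w).
Proof. move=> i j k; rewrite WE !linE !WijE; ring. Qed.
Lemma on_line_r c v w : on_line w (c *: wedge v w).
Proof. move=> i j k; rewrite WE !linE !WijE; ring. Qed.
Lemma on_line_comb a b v w : on_line (a *: v + b *: w) (wedge v w).
Proof. move=> i j k; rewrite WE !linE !WijE; ring. Qed.

Lemma qline_refl v : in_qline v v.
Proof. by exists 1, 0; rewrite scale1r scale0r addr0. Qed.

Lemma qline_trans (a b c : 'cV[C]_4) : in_qline a b -> in_qline b c -> in_qline a c.
Proof.
move=> [x [y ->]] [z [t ->]].
exists (x * z - y * t^*), (x * t + y * z^*).
rewrite quatjD !quatjZ quatjK.
apply/matrixP => i o; rewrite !linE; ring.
Qed.

Lemma qline_j (a b : 'cV[C]_4) : in_qline a b -> in_qline (quatj a) b.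
Proof.
move=> [x [y ->]]; exists (- y^*), x^*.
rewrite quatjD !quatjZ quatjK.
apply/matrixP => i o; rewrite !linE; ring.
Qed.

Lemma norm2_eq0 (x y : C) : x * x^* + y * y^* = 0 -> x = 0 /\ y = 0.
Proof.
rewrite -!normCK => /eqP; rewrite paddr_eq0 ?exprn_ge0 ?normr_ge0 //.
by rewrite !expf_eq0 /= !normr_eq0 => /andP[/eqP -> /eqP ->].
Qed.

Lemma qline_inv (a b : 'cV[C]_4) : a != 0 -> in_qline a b -> in_qline b a.
Proof.
move=> anz [x [y Ha]].
have Nnz : x * x^* + y * y^* != 0.
  apply/eqP => /norm2_eq0 [x0 y0]; move: anz; rewrite Ha x0 y0 !scale0r addr0.
  by rewrite eqxx.
exists (x^* / (x * x^* + y * y^*)), (- y / (x * x^* + y * y^*)).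
rewrite Ha quatjD !quatjZ quatjK.
apply/matrixP => i o; rewrite !linE; field.
by [].
Qed.

Lemma vec4_eta (c : 'cV[C]_4) : c = vec4 (c i0 ord0) (c i1 ord0) (c i2 ord0) (c i3 ord0).
Proof. by apply: col4P; rewrite !v4E. Qed.

Lemma trE m n (A : 'M[C]_(m,n)) i j : A^T i j = A j i.
Proof. by rewrite mxE. Qed.

Lemma alg (s t w c1 c2 l m : C) : s * w - c1 * l = 0 -> t * w - c2 * l^* = 0 ->
  s - c1 * m = 0 -> t - c2 * m^* = 0 -> s * t^* * (w - w^*) = 0.
Proof.
move=> /eqP; rewrite subr_eq0 => /eqP e1 /eqP; rewrite subr_eq0 => /eqP e2.
move=> /eqP; rewrite subr_eq0 => /eqP e3 /eqP; rewrite subr_eq0 => /eqP e4.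
have e2' : t^* * w^* = c2^* * l by rewrite -rmorphM e2 rmorphM /= conjCK.
have e4' : t^* = c2^* * m by rewrite e4 rmorphM /= conjCK.
transitivity (t^* * (s * w) - s * (t^* * w^*)); first by ring.
by rewrite e1 e2' e4' e3; ring.
Qed.

Section PQ.
Variables (p q : 'cV[C]_4).
Hypothesis Hq : qdirect p q.

Definition Em : 'M[C]_4 :=
  \matrix_(i, j) nth 0 [:: p i ord0; quatj p i ord0; q i ord0; quatj q i ord0] j.

Lemma EmE i j : Em i j = nth 0 [:: p i ord0; quatj p i ord0; q i ord0; quatj q i ord0] j.
Proof. by rewrite mxE. Qed.

Lemma mulE m n k (A : 'M[C]_(m,n)) (B : 'M[C]_(n,k)) i j : (A *m B) i j = \sum_(l < n) A i l * B l j.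
Proof. by rewrite mxE. Qed.

Lemma Evec a b c d : Em *m vec4 a b c d = a *: p + b *: quatj p + c *: q + d *: quatj q.
Proof.
apply/matrixP => i o; rewrite (ord1 o) {o} mulE big4 !EmE /= !v4E !linE; ring.
Qed.

Lemma Einj (c : 'cV[C]_4) : Em *m c = 0 -> c = 0.
Proof.
rewrite [c]vec4_eta Evec => /Hq [-> -> -> ->].
by apply: col4P; rewrite !v4E mxE.
Qed.

Lemma Eunit : Em \in unitmx.
Proof.
rewrite -unitmx_tr -row_free_unit -kermx_eq0; apply/eqP/row_matrixP => k.
rewrite row0; apply: trmx_inj; rewrite trmx0; apply: Einj.
have := mulmx_ker Em^T; move/(congr1 (row k)); rewrite row_mul row0.
by move/(congr1 trmx); rewrite trmx_mul trmxK trmx0.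
Qed.

Lemma FE : invmx Em *m Em = 1.
Proof. exact: mulVmx Eunit. Qed.

Lemma EKE_inv K : invmx Em *m (Em *m K *m Em^T) *m (invmx Em)^T = K.
Proof. by rewrite !mulmxA FE mul1mx -mulmxA -trmx_mul FE trmx1 mulmx1. Qed.

Lemma EKE_inj K K' : Em *m K *m Em^T = Em *m K' *m Em^T -> K = K'.
Proof. by move=> H; rewrite -(EKE_inv K) H EKE_inv. Qed.

Lemma wedgeEE (c d : 'cV[C]_4) : wedge (Em *m c) (Em *m d) = Em *m wedge c d *m Em^T.
Proof. by rewrite /wedge !trmx_mul mulmxBr mulmxBl !mulmxA. Qed.

Lemma EKEZ c K : c *: (Em *m K *m Em^T) = Em *m (c *: K) *m Em^T.
Proof. by rewrite scalemxAl scalemxAr. Qed.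

Lemma EKED K L : Em *m K *m Em^T + Em *m L *m Em^T = Em *m (K + L) *m Em^T.
Proof. by rewrite mulmxDr mulmxDl. Qed.

Lemma EKE_tr K : K^T = - K -> (Em *m K *m Em^T)^T = - (Em *m K *m Em^T).
Proof. by move=> HK; rewrite !trmx_mul trmxK HK mulNmx mulmxN mulmxA. Qed.

Lemma quatj_E (c : 'cV[C]_4) : quatj (Em *m c) = Em *m quatj c.
Proof.
rewrite [c]vec4_eta quatj_vec4 !Evec !quatjD !quatjZ !quatjK.
apply/matrixP => i o; rewrite !linE; ring.
Qed.

Lemma cfE (c : 'cV[C]_4) i : cf (invmx Em) i (Em *m c) = c i ord0.
Proof.
have := congr1 (fun v : 'cV[C]_4 => v i ord0) (esym (mulmxA (invmx Em) Em c)).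
by rewrite FE mul1mx /= mulE.
Qed.

Lemma eP : p = Em *m vec4 1 0 0 0.
Proof. by rewrite Evec !scale0r !scale1r !addr0. Qed.
Lemma ePj : quatj p = Em *m vec4 0 1 0 0.
Proof. by rewrite Evec !scale0r !scale1r !addr0 !add0r. Qed.
Lemma eQ : q = Em *m vec4 0 0 1 0.
Proof. by rewrite Evec !scale0r !scale1r !addr0 !add0r. Qed.
Lemma eQj : quatj q = Em *m vec4 0 0 0 1.
Proof. by rewrite Evec !scale0r !scale1r !add0r. Qed.
Lemma eV (a c : C) : a *: p + c *: q = Em *m vec4 a 0 c 0.
Proof. by rewrite Evec !scale0r !addr0. Qed.
Lemma eVj (a c : C) : a *: quatj p + c *: quatj q = Em *m vec4 0 a 0 c.
Proof. by rewrite Evec !scale0r !addr0 add0r. Qed.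

Lemma Evec_neq0 a b c d : (a != 0) || (b != 0) || (c != 0) || (d != 0) ->
  Em *m vec4 a b c d != 0.
Proof.
move=> H; apply/eqP => /Einj H0; move: H.
have := congr1 (fun v : 'cV[C]_4 => v i0 ord0) H0.
have := congr1 (fun v : 'cV[C]_4 => v i1 ord0) H0.
have := congr1 (fun v : 'cV[C]_4 => v i2 ord0) H0.
have := congr1 (fun v : 'cV[C]_4 => v i3 ord0) H0.
by rewrite !v4E !zeroE => -> -> -> ->; rewrite eqxx.
Qed.

End PQ.

Lemma lin0_2 (k1 k2 g L1 R1 L2 R2 : C) : L1 = R1 -> L2 = R2 ->
  g = k1 * (L1 - R1) + k2 * (L2 - R2) -> g = 0.
Proof. by move=> -> -> ->; rewrite !subrr !mulr0 addr0. Qed.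

Lemma one_neq0 (L R : C) : L = R -> 1 = L - R -> False.
Proof. by move=> -> ; rewrite subrr => /eqP; rewrite oner_eq0. Qed.

Section PQ2.
Variables (p q : 'cV[C]_4).
Hypothesis Hq : qdirect p q.

Lemma jEKE (c : C) x y : jwedge (Em p q *m (c *: wedge x y) *m (Em p q)^T) =
  Em p q *m (c^* *: wedge (quatj x) (quatj y)) *m (Em p q)^T.
Proof. rewrite -EKEZ -wedgeEE jwedgeZ jwedge_wedge. by rewrite !quatj_E wedgeEE EKEZ. Qed.

Lemma jEKE1 x y : jwedge (Em p q *m wedge x y *m (Em p q)^T) =
  Em p q *m wedge (quatj x) (quatj y) *m (Em p q)^T.
Proof. by rewrite -wedgeEE jwedge_wedge !quatj_E wedgeEE. Qed.

Lemma e1 (w : C) : w *: p + q = Em p q *m vec4 w 0 1 0.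
Proof. by rewrite Evec !scale0r !scale1r !addr0. Qed.
Lemma e2 (w : C) : w *: quatj p + quatj q = Em p q *m vec4 0 w 0 1.
Proof. by rewrite Evec !scale0r !scale1r addr0 add0r. Qed.

Lemma ht (w b : C) : w^* != w -> b != 0 ->
  inQ4 (b *: wedge (w *: p + q) (w *: quatj p + quatj q)) ->
  half_touch (b *: wedge (w *: p + q) (w *: quatj p + quatj q)) (wedge p q).
Proof.
move=> wnr bnz aQ.
have ea : b *: wedge (w *: p + q) (w *: quatj p + quatj q) =
   Em p q *m (b *: wedge (vec4 w 0 1 0) (vec4 0 w 0 1)) *m (Em p q)^T.
  by rewrite e1 e2 wedgeEE EKEZ.
have eb : wedge p q = Em p q *m wedge (vec4 1 0 0 0) (vec4 0 0 1 0) *m (Em p q)^T.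
  by rewrite -wedgeEE -eP -eQ.
split.
- split => //; split.
    apply/eqP => H.
    have H' : Em p q *m wedge (vec4 1 0 0 0) (vec4 0 0 1 0) *m (Em p q)^T =
              Em p q *m 0 *m (Em p q)^T by rewrite -eb H mulmx0 mul0mx.
    have := congr1 (fun M : 'M[C]_4 => M i0 i2) (EKE_inj Hq H').
    rewrite WE /= !WijE !v4E zeroE => h.
    by apply: (one_neq0 h); ring.
  rewrite eb pf_tr0 //; first by rewrite wedge_tr.
  rewrite /pf WE !WijE !v4E; ring.
- split.
    move=> [c H]; rewrite ea jEKE EKEZ in H.
    have HK := EKE_inj Hq H; rewrite !quatj_vec4 in HK.
    have h1 := congr1 (fun M : 'M[C]_4 => M i2 i3) HK.
    have h2 := congr1 (fun M : 'M[C]_4 => M i0 i3) HK.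
    rewrite /= WE !linE !WijE !v4E ?conjC0 ?conjC1 in h1 h2.
    have : b^* * (w^* - w) = 0 by apply: (lin0_2 (k1 := - w) (k2 := 1) h1 h2); ring.
    move/eqP; rewrite mulf_eq0 conjC_eq0 (negbTE bnz) subr_eq0 /=.
    by rewrite (negbTE wnr).
  move=> [c H]; rewrite eb jEKE1 EKEZ in H.
  have HK := EKE_inj Hq H; rewrite !quatj_vec4 in HK.
  have h1 := congr1 (fun M : 'M[C]_4 => M i1 i3) HK.
  rewrite /= WE !linE !WijE !v4E ?conjC0 ?conjC1 ?oppr0 in h1.
  by apply: (one_neq0 h1); ring.
- move=> c; apply/eqP => H; rewrite ea eb EKEZ in H.
  have HK := EKE_inj Hq H.
  have h1 := congr1 (fun M : 'M[C]_4 => M i2 i3) HK.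
  rewrite /= WE !linE !WijE !v4E in h1.
  have : b = 0 by apply: (lin0 h1); ring.
  by move/eqP; rewrite (negbTE bnz).
- move=> s t; rewrite ea eb !EKEZ EKED pf_tr0 //.
    apply/matrixP => i j; rewrite WE trE !linE !WijE; ring.
  rewrite /pf WE !linE !WijE !v4E; ring.
- move=> s t nz [c H]; move: nz.
  rewrite ea eb jwedgeD !jwedgeZ jEKE jEKE1 in H.
  rewrite !EKEZ !EKED !EKEZ in H.
  have HK := EKE_inj Hq H; rewrite !quatj_vec4 in HK.
  have h13 := congr1 (fun M : 'M[C]_4 => M i1 i3) HK.
  have h23 := congr1 (fun M : 'M[C]_4 => M i2 i3) HK.
  have h03 := congr1 (fun M : 'M[C]_4 => M i0 i3) HK.
  rewrite /= WE !linE !WijE !v4E ?conjC0 ?conjC1 ?oppr0 in h13 h23 h03.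
  have : t^* = 0 by apply: (lin0 h13); ring.
  move/eqP; rewrite conjC_eq0 => /eqP t0.
  have : s^* * b^* * (w^* - w) = 0 by apply: (lin0_2 (k1 := 1) (k2 := - w) h03 h23); ring.
  move/eqP; rewrite !mulf_eq0 !conjC_eq0 (negbTE bnz) subr_eq0 (negbTE wnr) !orbF.
  by move/eqP => s0; rewrite s0 t0 !scale0r addr0 eqxx.
Qed.

Lemma iffpart (w b : C) : w^* != w -> b != 0 -> forall u : 'cV[C]_4, u != 0 ->
  (on_sphere (b *: wedge (w *: p + q) (w *: quatj p + quatj q)) u /\ on_sphere (wedge p q) u <->
   in_qline u (w *: p + q) \/ in_qline u (w^* *: p + q)).
Proof.
move=> wnr bnz u unz.
have e23 : w *: quatj p + quatj q = quatj (w^* *: p + q) by rewrite quatjD quatjZ conjCK.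
have nz1 : forall x : C, x *: p + q != 0.
  by move=> x; rewrite e1 Evec_neq0 // oner_neq0 ?orbT.
have nz2 : w *: quatj p + quatj q != 0.
  by rewrite e2 Evec_neq0 // oner_neq0 ?orbT.
split.
- move=> [[u' [u'nz qa la]] [u'' [u''nz qb lb]]].
  have la' := on_line_scale bnz la.
  rewrite e1 e2 in la'.
  have := contraction (invmx (Em p q)) i2 i3 la'.
  rewrite !(cfE Hq) !v4E !mulr1 !mulr0 !subr0 scale1r -e1 -e2 => Hu'.
  have lb' : on_line u'' (wedge (Em p q *m vec4 1 0 0 0) (Em p q *m vec4 0 0 1 0)).
    by rewrite -eP -eQ.
  have := contraction (invmx (Em p q)) i0 i2 lb'.
  rewrite !(cfE Hq) !v4E !mulr1 !mulr0 !subr0 scale1r -(eP p q) -(eQ p q) => Hu''.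
  have [c1 [c2 Hc]] := qline_trans qa (qline_inv u''nz qb).
  rewrite Hu' Hu'' quatjD !quatjZ in Hc.
  set s := cf _ i2 u' in Hc Hu'; set t := cf _ i3 u' in Hc Hu'.
  set l := cf _ i0 u'' in Hc; set m := cf _ i2 u'' in Hc.
  have [z1 z2 z3 z4] := @Hq (s * w - c1 * l) (t * w - c2 * l^*) (s - c1 * m) (t - c2 * m^*)
    ltac:(apply/matrixP => i o; rewrite !linE;
          have := congr1 (fun v : 'cV[C]_4 => v i o) Hc; rewrite !linE => Hi;
          apply: (lin0 Hi); ring).
  have := alg z1 z2 z3 z4 => /eqP.
  rewrite !mulf_eq0 subr_eq0 (eq_sym w) (negbTE wnr) orbF conjC_eq0 => /orP [/eqP s0 | /eqP t0].
    right; have [x [y Hu]] := qline_inv u'nz qa.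
    rewrite Hu' s0 scale0r add0r e23 in Hu.
    exists (- (y * t^*)), (x * t).
    rewrite Hu quatjZ quatjK; apply/matrixP => i o; rewrite !linE; ring.
  left; have [x [y Hu]] := qline_inv u'nz qa.
  rewrite Hu' t0 scale0r addr0 in Hu.
  exists (x * s), (y * s^*).
  by rewrite Hu quatjZ !scalerA.
- case => [Hu | Hu].
    have qv := qline_inv unz Hu.
    split; exists (w *: p + q); split => //; first exact: on_line_l.
    by have := on_line_comb w 1 p q; rewrite scale1r.
  have qv := qline_inv unz Hu.
  split.
    exists (w *: quatj p + quatj q); split => //; last exact: on_line_r.
    by rewrite e23; apply: qline_j.
  exists (w^* *: p + q); split => //.
  by have := on_line_comb w^* 1 p q; rewrite scale1r.
Qed.

End PQ2.

End S.

Unset Implicit Arguments.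

Theorem mainTheorem14 (C : numClosedFieldType) (p q : 'cV[C]_4) :
  qdirect p q ->
  forall a : 'M[C]_4, in_Cr p q (p + q) a ->
    (* a corresponds to a point of the circle {[px+q] : x real} u {[p]} *)
    (exists x : C, exists c : C, x \is Num.real /\
        a = c *: wedge (x *: p + q) (quatj (x *: p + q)))
    \/ (exists c : C, a = c *: wedge p (quatj p))
    (* or a is a two-sphere half-touching S (twistor lift [p /\ q])
       exactly at [pz+q] and [p conj(z) + q] *)
    \/ (exists z : C,
          half_touch a (wedge p q) /\
          forall u : 'cV[C]_4, u != 0 ->
            (on_sphere a u /\ on_sphere (wedge p q) u <->
             in_qline u (z *: p + q) \/ in_qline u (Num.conj z *: p + q))).
Proof.
move=> Hq a [[anz pfa] [x [y [z Ha]]]].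
have eR : quatj (p + q) = Em p q *m vec4 0 1 0 1.
  by rewrite Evec !scale0r !scale1r add0r addr0 quatjD.
have eS : p + q = Em p q *m vec4 1 0 1 0.
  by rewrite Evec !scale0r !scale1r !addr0.
set K0 := x *: wedge (vec4 1 0 0 0) (vec4 0 1 0 0) + y *: wedge (vec4 0 0 1 0) (vec4 0 0 0 1)
   + z *: wedge (vec4 1 0 1 0) (vec4 0 1 0 1).
have eK : a = Em p q *m K0 *m (Em p q)^T.
  by rewrite Ha /K0 -!EKED -!EKEZ -!wedgeEE -eP -ePj -eQ -eQj -eS -eR.
have asymK : K0^T = - K0.
  by apply/matrixP => i j; rewrite /K0 WE trE !linE !WijE; ring.
have pfK : pf K0 = 0.
  rewrite -(EKE_inv Hq K0) -eK; apply: pf_tr0 => //.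
  by rewrite eK EKE_tr.
have key : (x + z) * (y + z) = z ^+ 2.
  apply/eqP; rewrite -subr_eq0; apply/eqP.
  move: pfK; rewrite /pf /K0 WE !linE !WijE !v4E => h.
  by apply: (lin0 h); ring.
case: (eqVneq z 0) => [z0 | znz].
  rewrite z0 in key Ha.
  have xy : x * y = 0.
    by move: key; rewrite !addr0 expr2 mulr0.
  move/eqP: xy; rewrite mulf_eq0 => /orP [/eqP x0 | /eqP y0].
    left; exists 0, y; split; first exact: rpred0.
    by rewrite Ha x0 !scale0r !add0r addr0.
  by right; left; exists x; rewrite Ha y0 !scale0r !addr0.
have bnz : y + z != 0.
  apply/eqP => h; move: key; rewrite h mulr0 => /esym/eqP.
  by rewrite expf_eq0 /= (negbTE znz).
pose w := z / (y + z).
have hx : x = z ^+ 2 / (y + z) - z by rewrite -key mulfK // addrK.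
have eK2 : K0 = (y + z) *: wedge (vec4 w 0 1 0) (vec4 0 w 0 1).
  apply/matrixP => i j; rewrite /K0 WE !linE !WijE.
  case: (ord4_cases i) => ->; case: (ord4_cases j) => ->;
    rewrite !v4E hx /w; field; try exact: bnz.
have ea : a = (y + z) *: wedge (w *: p + q) (w *: quatj p + quatj q).
  by rewrite eK eK2 -EKEZ -wedgeEE -e1 -e2.
case: (boolP (w \is Num.real)) => [wr | wnr].
  left; exists w, (y + z); split => //.
  by rewrite ea quatjD quatjZ (conj_Creal wr).
right; right; exists w.
have wnr' : w^* != w by apply: contra wnr => /eqP h; apply/CrealP.
rewrite ea; split.
  by apply: ht => //; rewrite -ea.
exact: iffpart.
Qed.
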